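(* For all integers $m\ge 0$ and $s\ge 0$, every $(m,s)$-semibipartite directed graph is not $(m+2)$-solvable.
   Context: A directed graph $D=(V,E)$ has arcs $E \subseteq \{(u,v)\in V^2 : u \neq v\}$ (bidirectional pairs allowed; an undirected graph is identified with the directed graph having both arcs for each edge). $N^-(v)=\{u:(u,v)\in E\}$. For $q\ge2$ let $[q]=\{0,\dots,q-1\}$. A $D$-function over $[q]$ is a map $f=(f_v)_{v\in V}:[q]^V\to[q]^V$ with each $f_v(x)$ depending only on $(x_u)_{u\in N^-(v)}$. $D$ is $q$-solvable if some $D$-function $f$ over $[q]$ has the property that for every $x\in[q]^V$ there is $v$ with $f_v(x)=x_v$. A directed graph $D$ is $(m,s)$-semibipartite if its vertex set can be partitioned as $V=L\cup R$ with $|L|=m$, $|R|=s$, the induced subgraph $D[L]$ has no arcs, and the induced subgraph $D[R]$ is acyclic (contains no directed cycle). *)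

(* Defs.v *)
From mathcomp Require Import all_boot.
Set Implicit Arguments. Unset Strict Implicit. Unset Printing Implicit Defensive.

(* A directed graph on a finite vertex set V is given by its arc relation E;
   loops are excluded (E v v = false).  N^-(v) = [set u | E u v]. *)
Definition loopless (V : finType) (E : rel V) : Prop := forall v, ~~ E v v.

Definition config (V : finType) (q : nat) := {ffun V -> 'I_q}.

Definition is_D_function (V : finType) (E : rel V) (q : nat)
  (f : V -> config V q -> 'I_q) : Prop :=
  forall (v : V) (x y : config V q),
    (forall u, E u v -> x u = y u) -> f v x = f v y.

Definition solvable (V : finType) (E : rel V) (q : nat) : Prop :=
  exists f : V -> config V q -> 'I_q,
    is_D_function E f /\ forall x : config V q, exists v : V, f v x = x v.

Definition acyclic_on (V : finType) (E : rel V) (R : {set V}) : Prop :=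
  forall c : seq V, c != [::] -> all (fun v => v \in R) c -> ~~ cycle E c.

Definition semibipartite (V : finType) (E : rel V) (m s : nat) : Prop :=
  exists L : {set V},
    [/\ #|L| = m, #|~: L| = s,
        (forall u v, u \in L -> v \in L -> ~~ E u v)
      & acyclic_on E (~: L)].

(* Main.v *)
Require Import Defs.
From mathcomp Require Import all_boot.

Set Implicit Arguments. Unset Strict Implicit. Unset Printing Implicit Defensive.

Section Sink.
Variables (V : finType) (E : rel V) (R : {set V}).

Lemma sink_exists (A : {set V}) :
  acyclic_on E R -> A \subset R -> A != set0 ->
  exists r, r \in A /\ forall u, u \in A -> ~~ E r u.
Proof.
move=> Hac HAR /set0Pn [a0 Ha0].
case: (boolP [exists r in A, [forall u in A, ~~ E r u]]).
  move=> /exists_inP [r Hr /forall_inP H]; by exists r.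
move=> Hn; exfalso.
have Hsucc : forall r, r \in A -> exists u, (u \in A) && E r u.
  move=> r Hr; case: (boolP [exists u in A, E r u]).
    by move=> /exists_inP [u Hu Hru]; exists u; rewrite Hu.
  move=> Hn2; move: Hn; rewrite negb_exists_in => /forall_inP /(_ r Hr).
  rewrite negb_forall_in => /existsP [u /andP [Hu]]; rewrite negbK => Hru.
  by exists u; rewrite Hu.
pose h v := odflt v [pick u | (u \in A) && E v u].
have Hh : forall v, v \in A -> (h v \in A) && E v (h v).
  move=> v Hv; rewrite /h; case: pickP => //= Hp.
  by case: (Hsucc v Hv) => u Hu; move: (Hp u); rewrite Hu.
have HhA : forall v, v \in A -> h v \in A by move=> v /Hh /andP [].
have HiA : forall k y, y \in A -> iter k h y \in A.
  by elim=> [|k IH] y Hy //=; apply: HhA; apply: IH.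
have HtrA : forall n y, y \in A -> all (mem A) (traject h y n).
  by elim=> [|n IH] y Hy //=; rewrite Hy /= IH // HhA.
pose F (i : 'I_#|V|.+1) := iter i h a0.
have : ~~ injectiveb F.
  apply/negP => /injectiveP Hinj; move: (leq_card F Hinj).
  by rewrite card_ord ltnn.
move=> /injectivePn [i [j Hij HF]].
have key : forall i j : 'I_#|V|.+1, i < j -> F i = F j -> False.
  move=> {Hij HF} i1 j1 Hlt HF.
  pose y := iter i1 h a0.
  pose n := j1 - i1.
  have Hn0 : 0 < n by rewrite subn_gt0.
  have Hy : iter n h y = y.
    by rewrite /y -iterD subnK ?(ltnW Hlt) //; symmetry.
  case En : n Hn0 Hy => [//|n'] _ Hy.
  have Hyin : y \in A by apply: HiA.
  have HallR : all (fun v => v \in R) (traject h y n'.+1).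
    apply: (sub_all _ (HtrA _ _ Hyin)) => v /= Hv; exact: (subsetP HAR).
  have := Hac (traject h y n'.+1) erefl HallR.
  move=> /negP; apply; rewrite /=.
  rewrite rcons_path; apply/andP; split.
    apply: (@sub_in_path _ (mem A) (frel h)).
    - move=> u v Hu _ /eqP <-; by case/andP: (Hh u Hu).
    - exact: (HtrA n'.+1 y Hyin).
    exact: fpath_traject.
  rewrite last_traject.
  by case/andP: (Hh (iter n' h y) (HiA _ _ Hyin)) => _; rewrite -iterS Hy.
case: (ltngtP i j) => Hc.
- exact: (key i j Hc HF).
- exact: (key j i Hc (esym HF)).
- by move: Hij; rewrite (val_inj Hc) eqxx.
Qed.
End Sink.

Theorem theorem10 (m s : nat) (V : finType) (E : rel V) :
  loopless E -> semibipartite E m s -> ~ solvable E (m + 2).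
Proof.
move=> Hll [L [HL _ HLL Hac]] [f [Df Hsol]].
have Hle : m.+1 <= m + 2 by rewrite addn2.
pose g (c : 'I_m.+1) (x : config V (m+2)) : config V (m+2) :=
  [ffun v => if v \in L then widen_ord Hle c else x v].
pose z : 'I_(m+2) := widen_ord Hle ord0.
have main : forall n (A : {set V}), #|A| <= n -> A \subset ~: L ->
    exists x : config V (m+2), forall r, r \in A -> forall c, f r (g c x) != x r.
  elim=> [|n IH] A HA HAR.
    exists [ffun=> z] => r Hr; move: HA; rewrite leqn0 => /eqP /cards0_eq HA0.
    by move: Hr; rewrite HA0 inE.
  case: (eqVneq A set0) => [HA0|HAn].
    by exists [ffun=> z] => r; rewrite HA0 inE.
  have [r [Hr Hsink]] := sink_exists Hac HAR HAn.
  have HA' : #|A :\ r| <= n.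
    by move: HA; rewrite (cardsD1 r A) Hr add1n ltnS.
  have [x Hx] := IH (A :\ r) HA' (subset_trans (subD1set A r) HAR).
  pose S := [set f r (g c x) | c in [set: 'I_m.+1]].
  have : ~: S != set0.
    apply/negP => /eqP HS.
    have : #|S| <= m.+1 by apply: leq_trans (leq_imset_card _ _) _; rewrite cardsT card_ord.
    have : #|S| = m + 2.
      by rewrite -(setCK S) HS setC0 cardsT card_ord.
    by move=> ->; rewrite addn2 ltnn.
  case/set0Pn => nv; rewrite inE => Hnv.
  pose x' : config V (m+2) := [ffun v => if v == r then nv else x v].
  have Hagree : forall u, u \in A -> forall c, f u (g c x') = f u (g c x).
    move=> u Hu c; apply: Df => w Hwu.
    have Hwr : w != r.
      apply/negP => /eqP Hw; subst w.
      case: (eqVneq u r) => [Hur|Hur].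
        by subst u; move: (Hll r); rewrite Hwu.
      by move: (Hsink u Hu); rewrite Hwu.
    by rewrite !ffunE (negbTE Hwr).
  exists x' => u Hu c; rewrite Hagree //.
  case: (eqVneq u r) => [Hur|Hur].
    subst u; rewrite ffunE eqxx; apply/negP => /eqP Heq; move: Hnv.
    by rewrite -Heq; apply/negP/negPn; apply/imsetP; exists c; rewrite ?inE.
  rewrite ffunE (negbTE Hur); apply: Hx.
  by rewrite in_setD1 Hur Hu.
have [x Hx] := main _ (~: L) (leqnn _) (subxx _).
pose y := g ord0 x.
have HLind : forall l c, l \in L -> f l (g c x) = f l y.
  move=> l c Hl; apply: Df => w Hwl.
  have HwL : w \notin L.
    by apply/negP => HwL; move: (HLL w l HwL Hl); rewrite Hwl.
  by rewrite !ffunE (negbTE HwL).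
pose S := [set f l y | l in L].
pose T := [set widen_ord Hle c | c in [set: 'I_m.+1]].
have : ~~ (T \subset S).
  apply/negP => /subset_leq_card.
  rewrite card_imset; last by move=> a b /(congr1 val) /= /val_inj.
  rewrite cardsT card_ord.
  move=> H; have := leq_trans H (leq_imset_card _ _).
  by rewrite HL ltnn.
case/subsetPn => t /imsetP [c _ ->] HtS.
have [v Hv] := Hsol (g c x).
case: (boolP (v \in L)) => HvL.
  move: Hv; rewrite HLind // /g ffunE HvL => Hv.
  by move: HtS; rewrite -Hv; apply/negP/negPn; apply/imsetP; exists v.
have HvC : v \in ~: L by rewrite inE.
move: (Hx v HvC c); rewrite Hv /g ffunE (negbTE HvL) eqxx.
done.
Qed.
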